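(* Let $\mathcal S\in\mathrm{TP}(n)$ and let $C\subseteq[n]$ with $|C|\ge 2$. Let $D$ be the minimal element of $\mathrm{cip}(\mathcal S)$ containing $C$. Then there exist distinct $i,j\in C$ such that $\overline{ij}=D$.
   Context: A rooted tree on leaf set $[n]$ has leaves labeled bijectively by $[n]$ and internal vertices each with at least two children; a clade is the set of leaves below an internal vertex, and $\mathrm{clade}(T)$ is the set of clades (including $[n]$). $\mathrm{TP}(n)$ is the collection of all sets of the form $\mathcal S=\mathrm{clade}(T_1)\cup\mathrm{clade}(T_2)$ for rooted trees $T_1,T_2$ on leaf set $[n]$. The clade intersection poset $\mathrm{cip}(\mathcal S)$ consists of the elements of $\mathcal S$ together with all intersections of elements of $\mathcal S$ that contain at least two elements, partially ordered by inclusion. For a pair $i\ne j$, $\overline{ij}$ denotes the unique smallest element of $\mathrm{cip}(\mathcal S)$ containing $\{i,j\}$ (and, similarly, the minimal element of $\mathrm{cip}(\mathcal S)$ containing a set $C$ with $|C|\ge2$ is the intersection of all elements of $\mathcal S$ containing $C$). *)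

(* Defs.v *)
From mathcomp Require Import all_boot.
Set Implicit Arguments. Unset Strict Implicit. Unset Printing Implicit Defensive.

(* Leaf set [n] is represented by 'I_n (labels 0..n-1). *)

Inductive rtree (n : nat) : Type :=
| Leaf of 'I_n
| Node of seq (rtree n).

Arguments Leaf {n}.
Arguments Node {n}.

Fixpoint leaves (n : nat) (t : rtree n) : seq 'I_n :=
  match t with
  | Leaf i => [:: i]
  | Node ts => (fix lv (l : seq (rtree n)) : seq 'I_n :=
                  match l with [::] => [::] | u :: l' => leaves u ++ lv l' end) ts
  end.

Fixpoint wf_tree (n : nat) (t : rtree n) : bool :=
  match t with
  | Leaf _ => true
  | Node ts => (2 <= size ts) &&
      (fix wl (l : seq (rtree n)) : bool :=
         match l with [::] => true | u :: l' => wf_tree u && wl l' end) ts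
  end.

Definition is_tree_on (n : nat) (t : rtree n) : bool :=
  wf_tree t && perm_eq (leaves t) (enum 'I_n).

Fixpoint clade_list (n : nat) (t : rtree n) : seq {set 'I_n} :=
  match t with
  | Leaf _ => [::]
  | Node ts => [set x in leaves t] ::
      (fix cl (l : seq (rtree n)) : seq {set 'I_n} :=
         match l with [::] => [::] | u :: l' => clade_list u ++ cl l' end) ts
  end.

Definition clade (n : nat) (t : rtree n) : {set {set 'I_n}} := [set A in clade_list t].

Definition TP (n : nat) (S : {set {set 'I_n}}) : Prop :=
  exists T1 T2 : rtree n, is_tree_on T1 /\ is_tree_on T2 /\ S = clade T1 :|: clade T2.

Definition cip (n : nat) (S : {set {set 'I_n}}) : {set {set 'I_n}} :=
  S :|: [set A : {set 'I_n} | (2 <= #|A|) &&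
          [exists F : {set {set 'I_n}},
             [&& F \subset S, F != set0 & A == \bigcap_(B in F) B]]].

Definition min_cip (n : nat) (S : {set {set 'I_n}}) (C D : {set 'I_n}) : Prop :=
  D \in cip S /\ C \subset D /\ (forall E, E \in cip S -> C \subset E -> D \subset E).

(* Main.v *)
Require Import Defs.
From mathcomp Require Import all_boot.
Set Implicit Arguments. Unset Strict Implicit. Unset Printing Implicit Defensive.

Section T.
Variable n : nat.

Definition lamP (l : seq {set 'I_n}) : Prop :=
  forall A B, A \in l -> B \in l ->
    [\/ A \subset B, B \subset A | forall x, x \in A -> x \notin B].

Fixpoint lvs (l : seq (rtree n)) : seq 'I_n :=
  match l with [::] => [::] | u :: l' => leaves u ++ lvs l' end.
Fixpoint cls (l : seq (rtree n)) : seq {set 'I_n} :=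
  match l with [::] => [::] | u :: l' => clade_list u ++ cls l' end.

Lemma leavesN ts : leaves (Node ts) = lvs ts. Proof. by []. Qed.
Lemma cladeN ts : clade_list (Node ts) = [set x in lvs ts] :: cls ts. Proof. by []. Qed.

Definition Q (t : rtree n) : Prop := uniq (leaves t) ->
  (forall A, A \in clade_list t -> A \subset [set x in leaves t]) /\ lamP (clade_list t).

Section Ind.
Variable P : rtree n -> Prop.
Hypothesis HL : forall i, P (Leaf i).
Hypothesis HN : forall ts, foldr (fun u a => P u /\ a) True ts -> P (Node ts).
Fixpoint tind (t : rtree n) : P t :=
  match t with
  | Leaf i => HL i
  | Node ts => HN ((fix f (l : seq (rtree n)) : foldr (fun u a => P u /\ a) True l :=
                     match l with [::] => I | u :: l' => conj (tind u) (f l') end) ts)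
  end.
End Ind.

Lemma forestQ ts : foldr (fun u a => Q u /\ a) True ts -> uniq (lvs ts) ->
  (forall A, A \in cls ts -> A \subset [set x in lvs ts]) /\ lamP (cls ts).
Proof.
elim: ts => [|u ts IH] /=.
  by move=> _ _; split=> // A B.
case=> Qu Hts; rewrite cat_uniq => /and3P[uu hd ut].
have [su lu] := Qu uu; have [st lt] := IH Hts ut.
have sub1 A : A \in clade_list u -> A \subset [set x in leaves u ++ lvs ts].
  move=> /su /subset_trans; apply; apply/subsetP=> x; rewrite !inE mem_cat => ->//.
have sub2 A : A \in cls ts -> A \subset [set x in leaves u ++ lvs ts].
  move=> /st /subset_trans; apply; apply/subsetP=> x; rewrite !inE mem_cat => ->; apply: orbT.
have cross A B : A \in clade_list u -> B \in cls ts -> forall x, x \in A -> x \notin B.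
  move=> /su /subsetP HA /st /subsetP HB x /HA; rewrite inE => xu; apply/negP => /HB.
  rewrite inE => xt; move/hasPn: hd => /(_ x xt); by rewrite xu.
split.
  by move=> A; rewrite mem_cat => /orP[/sub1|/sub2].
move=> A B; rewrite !mem_cat => /orP[hA|hA] /orP[hB|hB].
- exact: lu.
- by apply: Or33; apply: cross.
- apply: Or33 => x xA; apply/negP => xB; move: (cross _ _ hB hA x xB); by rewrite xA.
- exact: lt.
Qed.

Lemma treeQ t : Q t.
Proof.
elim/tind: t => [i|ts H]; first by move=> _; split=> // A B.
rewrite /Q leavesN cladeN => U.
have [s l] := forestQ H U.
split.
  by move=> A; rewrite inE => /orP[/eqP->|/s].
move=> A B; rewrite !inE => /orP[/eqP->|hA] /orP[/eqP->|hB].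
- by apply: Or31.
- by apply: Or32; apply: s.
- by apply: Or31; apply: s.
- exact: l.
Qed.

Lemma clade_lam (t : rtree n) : is_tree_on t ->
  forall A B, A \in clade t -> B \in clade t ->
    [\/ A \subset B, B \subset A | forall x, x \in A -> x \notin B].
Proof.
case/andP=> _ pe.
have U : uniq (leaves t) by rewrite (perm_uniq pe) enum_uniq.
have [_ l] := treeQ U.
by move=> A B; rewrite !inE; apply: l.
Qed.
End T.

Section C.
Variable n : nat.
Definition lamK (K : {set {set 'I_n}}) := forall A B, A \in K -> B \in K ->
    [\/ A \subset B, B \subset A | forall x, x \in A -> x \notin B].

Definition Rel (K : {set {set 'I_n}}) (C : {set 'I_n}) i j :=
  [exists B in K, [&& i \in B, j \in B & ~~ (C \subset B)]].

Variables (K : {set {set 'I_n}}) (C : {set 'I_n}).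
Hypothesis lK : lamK K.

Lemma Rsym i j : Rel K C i j -> Rel K C j i.
Proof. by case/exists_inP=> B BK /and3P[a b c]; apply/exists_inP; exists B; rewrite ?a ?b. Qed.

Lemma Rtrans x y z : Rel K C x y -> Rel K C y z -> Rel K C x z.
Proof.
case/exists_inP=> B BK /and3P[xB yB cB]; case/exists_inP=> B' BK' /and3P[yB' zB' cB'].
apply/exists_inP; case: (lK BK BK') => [/subsetP s| /subsetP s| d].
- by exists B' => //; rewrite (s x xB) zB' cB'.
- by exists B => //; rewrite xB (s z zB') cB.
- by move: (d y yB); rewrite yB'.
Qed.

Lemma exists_nonR : 2 <= #|C| ->
  exists x y, [/\ x \in C, y \in C, x != y & ~~ Rel K C x y].
Proof.
move=> c2.
case: (boolP [exists x in C, exists y in C, (x != y) && ~~ Rel K C x y]).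
  by case/exists_inP=> x xC /exists_inP[y yC /andP[a b]]; exists x, y.
rewrite negb_exists_in => /forall_inP H.
have : 0 < #|C| by apply: leq_trans c2.
rewrite card_gt0 => /set0Pn[x xC].
have HR y : y \in C -> x != y -> Rel K C x y.
  move=> yC xy; move: (H x xC); rewrite negb_exists_in => /forall_inP /(_ y yC).
  by rewrite xy /= negbK.
have [y yC xy] : exists2 y, y \in C & x != y.
  have : 1 < #|C| by [].
  rewrite (cardsD1 x) xC ltnS card_gt0 => /set0Pn[y]; rewrite !inE => /andP[a b].
  by exists y; rewrite // eq_sym.
case/exists_inP: (HR y yC xy) => B0 B0K /and3P[xB0 _ cB0].
pose P := fun B : {set 'I_n} => [&& B \in K, x \in B & ~~ (C \subset B)].
have P0 : P B0 by rewrite /P B0K xB0.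
case: (@arg_maxnP _ B0 P (fun B : {set 'I_n} => #|B|) P0) => B /and3P[BK xB cB] Bmax.
have [z zC zB] : exists2 z, z \in C & z \notin B.
  case: (boolP [exists z in C, z \notin B]) => [/exists_inP[z ? ?]|]; first by exists z.
  rewrite negb_exists_in => /forall_inP h; case/negP: cB; apply/subsetP=> w /h.
  by rewrite negbK.
have xz : x != z by apply/eqP=> e; move: zB; rewrite -e xB.
case/exists_inP: (HR z zC xz) => B' B'K /and3P[xB' zB' cB'].
case: (lK BK B'K) => [s|/subsetP s|d].
- have := Bmax B'; rewrite /P B'K xB' cB' => /(_ isT) le.
  have : B == B' by rewrite eqEcard s; exact: le.
  by move/eqP=> e; move: zB; rewrite e zB'.
- by move: zB; rewrite s.
- by move: (d x xB); rewrite xB'.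
Qed.
End C.

Lemma separate n (K1 K2 : {set {set 'I_n}}) (C : {set 'I_n}) :
  lamK K1 -> lamK K2 -> 2 <= #|C| ->
  exists i j, [/\ i \in C, j \in C, i != j & ~~ Rel K1 C i j && ~~ Rel K2 C i j].
Proof.
move=> l1 l2 c2.
case: (boolP [exists i in C, exists j in C, (i != j) && (~~ Rel K1 C i j && ~~ Rel K2 C i j)]).
  by case/exists_inP=> x xC /exists_inP[y yC /andP[a b]]; exists x, y.
rewrite negb_exists_in => /forall_inP H.
have HH i j : i \in C -> j \in C -> i != j -> ~~ Rel K1 C i j -> Rel K2 C i j.
  move=> iC jC ij n1; move: (H i iC); rewrite negb_exists_in => /forall_inP /(_ j jC).
  by rewrite ij n1 /= negbK.
have [x [y [xC yC xy nxy]]] := exists_nonR l1 c2.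
have R2xy := HH _ _ xC yC xy nxy.
have Hz z : z \in C -> z != x -> Rel K2 C z x.
  move=> zC zx; case: (boolP (Rel K1 C z x)) => r; last exact: HH.
  have nzy : ~~ Rel K1 C z y.
    apply/negP=> r'; case/negP: nxy; exact (Rtrans l1 (Rsym r) r').
  have zy : z != y by apply/eqP=> e; case/negP: nxy; rewrite -e; exact: Rsym.
  exact (Rtrans l2 (HH _ _ zC yC zy nzy) (Rsym R2xy)).
have [u [v [uC vC uv nuv]]] := exists_nonR l2 c2.
case/negP: nuv.
case: (eqVneq u x) => [e|ux].
  by rewrite e eq_sym in uv; rewrite e; exact (Rsym (Hz _ vC uv)).
case: (eqVneq v x) => [->|vx]; first exact: Hz.
exact (Rtrans l2 (Hz _ uC ux) (Rsym (Hz _ vC vx))).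
Qed.

Theorem lemma3p10 (n : nat) (S : {set {set 'I_n}}) (C D : {set 'I_n}) :
  TP S -> 2 <= #|C| -> min_cip S C D ->
  exists i j : 'I_n, [/\ i \in C, j \in C, i != j & min_cip S [set i; j] D].
Proof.
move=> [T1 [T2 [t1 [t2 ->]]]] c2 [Dc [CD Dmin]].
have l1 : lamK (clade T1) := clade_lam t1.
have l2 : lamK (clade T2) := clade_lam t2.
have [i [j [iC jC ij /andP[n1 n2]]]] := separate l1 l2 c2.
have key B : B \in clade T1 :|: clade T2 -> i \in B -> j \in B -> D \subset B.
  move=> BS iB jB; apply: Dmin; first by rewrite /cip inE BS.
  move: BS; rewrite in_setU => /orP[] BK; apply/negPn/negP => nc.
    by case/negP: n1; apply/exists_inP; exists B => //; rewrite iB jB nc.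
  by case/negP: n2; apply/exists_inP; exists B => //; rewrite iB jB nc.
exists i, j; split => //; split => //; split.
  apply/subsetP => x; rewrite !inE => /orP[/eqP->|/eqP->]; exact: (subsetP CD).
move=> E; rewrite /cip inE => /orP[ES|HE] sub.
  by apply: key => //; apply: (subsetP sub); rewrite !inE eqxx ?orbT.
move: HE; rewrite inE => /andP[_ /existsP[F /and3P[FS _ /eqP eE]]].
have iE : i \in E by apply: (subsetP sub); rewrite !inE eqxx ?orbT.
have jE : j \in E by apply: (subsetP sub); rewrite !inE eqxx ?orbT.
rewrite eE in iE jE *.
apply/bigcapsP => B BF; apply: key.
- exact: (subsetP FS).
- exact: (bigcapP iE).
- exact: (bigcapP jE).
Qed.
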